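(* Let $\boldsymbol{\theta}$ be a parameter (scalar or vector) whose treatment effect $\theta=\theta(\boldsymbol{\theta})$ is real-valued, let $\delta\in\mathbb{R}$ be a clinical margin and $c\in(0,1)$. Let $\mathcal{E}=\{\theta>\delta\}$ and $\bar{\mathcal{E}}=\{\theta\le\delta\}$. Let $\pi_{\mathrm{a}}$ (analysis prior) and $\pi_{\mathrm{d}}$ (design prior) be priors on $\boldsymbol{\theta}$, each giving positive probability to both $\mathcal{E}$ and $\bar{\mathcal{E}}$, and let data $\mathcal{D}$ have likelihood $f(\mathcal{D}\mid\boldsymbol{\theta})$. Assume $\pi_{\mathrm{a}}(\boldsymbol{\theta}\mid\mathcal{E})=\pi_{\mathrm{d}}(\boldsymbol{\theta}\mid\mathcal{E})$ and $\pi_{\mathrm{a}}(\boldsymbol{\theta}\mid\bar{\mathcal{E}})=\pi_{\mathrm{d}}(\boldsymbol{\theta}\mid\bar{\mathcal{E}})$. Define the success indicator $\mathcal{S}(\mathcal{D};c)=\mathbb{I}\{\Pr_{\mathrm{a}}(\mathcal{E}\mid\mathcal{D})>c\}$, and the probability of incorrect decision $\mathrm{PID}(c)=\Pr_{\mathrm{d}}(\bar{\mathcal{E}}\mid\mathcal{S}(\mathcal{D};c)=1)$, computed under the joint model $\boldsymbol{\theta}\sim\pi_{\mathrm{d}}$, $\mathcal{D}\mid\boldsymbol{\theta}\sim f$ (assuming $\Pr_{\mathrm{d}}(\mathcal{S}=1)>0$). Let $OE_{\mathrm{d}}=\Pr_{\mathrm{d}}(\mathcal{E})/\Pr_{\mathrm{d}}(\bar{\mathcal{E}})$,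 $OE_{\mathrm{a}}=\Pr_{\mathrm{a}}(\mathcal{E})/\Pr_{\mathrm{a}}(\bar{\mathcal{E}})$ and $R=OE_{\mathrm{d}}/OE_{\mathrm{a}}$. Then $$\mathrm{PID}(c)\le\frac{1}{R\left(\frac{c}{1-c}\right)+1}.$$
   Context: $\Pr_{\mathrm{a}}(\cdot\mid\mathcal{D})$ denotes the posterior under the analysis prior, $\Pr_{\mathrm{a}}$ and $\Pr_{\mathrm{d}}$ prior probabilities under the analysis and design priors; $\pi(\boldsymbol{\theta}\mid\mathcal{E})$ denotes the prior conditioned on the event $\mathcal{E}$. *)

(* Defs.v *)
From HB Require Import structures.
From mathcomp Require Import all_boot all_order all_algebra.
From mathcomp Require Import all_classical all_reals all_analysis.
Set Implicit Arguments. Unset Strict Implicit. Unset Printing Implicit Defensive.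
Import Order.TTheory GRing.Theory Num.Theory.
Local Open Scope classical_set_scope.
Local Open Scope ring_scope.

Section BayesDefs.
Context {d1 d2 : measure_display} {T : measurableType d1} {X : measurableType d2}
  {R : realType}.

Definition Pr (P : probability T R) (A : set T) : R := fine (P A).

Definition effect_event (th : T -> R) (delta : R) : set T :=
  [set t | delta < th t].

Definition odds (P : probability T R) (E : set T) : R :=
  Pr P E / Pr P (~` E).

(* Posterior probability of E given data x, under prior P and likelihood
   density f t x (w.r.t. a dominating measure on X), by Bayes' formula. *)
Definition posterior (P : probability T R) (f : T -> X -> R) (E : set T)
  (x : X) : R :=
  fine (\int[P]_(t in E) (f t x)%:E) / fine (\int[P]_t (f t x)%:E).

Definition success (Pa : probability T R) (f : T -> X -> R) (E : set T)
  (c : R) : set X :=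
  [set x | c < posterior Pa f E x].

Definition joint (P : probability T R) (mu : {measure set X -> \bar R})
  (f : T -> X -> R) (B : set T) (C : set X) : \bar R :=
  (\int[P]_(t in B) \int[mu]_(x in C) (f t x)%:E)%E.

Definition PID (Pa Pd : probability T R) (mu : {measure set X -> \bar R})
  (f : T -> X -> R) (E : set T) (c : R) : R :=
  fine (joint Pd mu f (~` E) (success Pa f E c)) /
  fine (joint Pd mu f setT (success Pa f E c)).

End BayesDefs.

(* Main.v *)
Require Import Defs.
From HB Require Import structures.
From mathcomp Require Import all_boot all_order all_algebra.
From mathcomp Require Import all_classical all_reals all_analysis.
From mathcomp Require Import measurable_realfun ring lra.
Import Order.TTheory GRing.Theory Num.Theory.
Local Open Scope classical_set_scope.
Local Open Scope ring_scope.

Definition mksf {d2} {X : measurableType d2} {R : realType}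
  {mu : {measure set X -> \bar R}} (H : sigma_finite setT mu) :
  {sigma_finite_measure set X -> \bar R} :=
  @SigmaFiniteMeasure.Pack _ _ _ (Measure.sort mu)
   (@SigmaFiniteMeasure.Class _ _ _ (Measure.sort mu)
     (Measure.measure_function_isContent_mixin (Measure.class mu))
     (Measure.measure_function_Content_isMeasure_mixin (Measure.class mu))
     (isSFinite.phant_Build (sfinite_measure_sigma_finite H))
     (isSigmaFinite.phant_Build H)).

Lemma swap_int d1 d2 (T1 : measurableType d1) (T2 : measurableType d2)
  (R : realType) (m1 : {sigma_finite_measure set T1 -> \bar R})
  (m2 : {sigma_finite_measure set T2 -> \bar R}) (F : T1 * T2 -> \bar R)
  (B : set T1) (S : set T2) :
  measurable_fun setT F -> (forall p, (0 <= F p)%E) ->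
  measurable B -> measurable S ->
  (\int[m1]_(t in B) \int[m2]_(x in S) F (t, x) =
   \int[m2]_(x in S) \int[m1]_(t in B) F (t, x))%E.
Proof.
move=> mF F0 mB mS.
pose H := F \_ (B `*` S).
have mH : measurable_fun setT H.
  apply/(measurable_restrictT _ _).1; first exact: measurableX.
  exact: measurable_funS mF.
have H0 p : (0 <= H p)%E by apply: erestrict_ge0 => q _; exact: F0.
rewrite integral_mkcond [RHS]integral_mkcond.
transitivity (\int[m1]_t \int[m2]_x H (t, x))%E.
  apply: eq_integral => t _; rewrite /patch; case: ifPn => tB.
    rewrite integral_mkcond; apply: eq_integral => x _.
    by rewrite /H /patch in_setX /= tB.
  apply/esym; rewrite (eq_integral (fun=> 0%E)); first exact: integral0.
  by move=> x _; rewrite /H /patch in_setX /= (negbTE tB).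
rewrite fubini_tonelli //.
apply: eq_integral => x _; rewrite /patch; case: ifPn => xS.
  rewrite [RHS]integral_mkcond; apply: eq_integral => t _.
  by rewrite /H /patch in_setX /= xS andbT.
rewrite (eq_integral (fun=> 0%E)); first exact: integral0.
by move=> t _; rewrite /H /patch in_setX /= (negbTE xS) andbF.
Qed.

Lemma measG d1 d2 (T1 : measurableType d1) (T2 : measurableType d2)
  (R : realType) (m1 : {sigma_finite_measure set T1 -> \bar R})
  (F : T1 * T2 -> \bar R) (B : set T1) :
  measurable_fun setT F -> (forall p, (0 <= F p)%E) -> measurable B ->
  measurable_fun setT (fun x => \int[m1]_(t in B) F (t, x))%E.
Proof.
move=> mF F0 mB.
pose H := F \_ (B `*` setT).
have mH : measurable_fun setT H.
  apply/(measurable_restrictT _ _).1; first exact: measurableX.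
  exact: measurable_funS mF.
have H0 p : (0 <= H p)%E by apply: erestrict_ge0 => q _; exact: F0.
rewrite (_ : (fun x => _) = fubini_G m1 H).
  exact: measurable_fun_fubini_tonelli_G.
apply/funext => x; rewrite /fubini_G [LHS]integral_mkcond.
apply: eq_integral => t _.
by rewrite /H /patch in_setX /= in_setT andbT.
Qed.

Lemma measF d1 d2 (T1 : measurableType d1) (T2 : measurableType d2)
  (R : realType) (m2 : {sigma_finite_measure set T2 -> \bar R})
  (F : T1 * T2 -> \bar R) (S : set T2) :
  measurable_fun setT F -> (forall p, (0 <= F p)%E) -> measurable S ->
  measurable_fun setT (fun t => \int[m2]_(x in S) F (t, x))%E.
Proof.
move=> mF F0 mS.
pose H := F \_ (setT `*` S).
have mH : measurable_fun setT H.
  apply/(measurable_restrictT _ _).1; first exact: measurableX.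
  exact: measurable_funS mF.
have H0 p : (0 <= H p)%E by apply: erestrict_ge0 => q _; exact: F0.
rewrite (_ : (fun t => _) = fubini_F m2 H).
  exact: measurable_fun_fubini_tonelli_F.
apply/funext => t; rewrite /fubini_F [LHS]integral_mkcond; apply: eq_integral => x _.
by rewrite /H /patch in_setX /= in_setT.
Qed.

Lemma int_scale d (T : measurableType d) (R : realType)
  (P1 P2 : {measure set T -> \bar R}) (D : set T) (k : R) (h : T -> \bar R) :
  measurable D -> 0 <= k -> measurable_fun D h -> (forall t, D t -> (0 <= h t)%E) ->
  (forall A, measurable A -> A `<=` D -> P1 A = (k%:E * P2 A)%E) ->
  (\int[P1]_(t in D) h t = k%:E * \int[P2]_(t in D) h t)%E.
Proof.
move=> mD k0 mh h0 HP.
rewrite (eq_measure_integral (mscale (NngNum k0) P2)).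
  by rewrite ge0_integral_mscale.
by move=> A mA AD; rewrite HP.
Qed.
Lemma key_ineq (R : realType) (k k' c : R) (u v : \bar R) :
  0 < k -> 0 < k' -> 0 < c -> c < 1 -> (0 <= u)%E -> (0 <= v)%E ->
  c < fine (k%:E * u)%E / fine (k%:E * u + k'%:E * v)%E ->
  (v <= ((1 - c) * k / (c * k'))%:E * u)%E.
Proof.
move=> k0 k'0 c0 c1.
have Ey (r : R) : 0 < r -> (r%:E * +oo)%E = +oo%E by move=> r0; rewrite mulry gtr0_sg // mul1e.
case: u => [u| |] //; case: v => [v| |] // u0 v0.
- rewrite lee_fin in u0; rewrite lee_fin in v0.
  rewrite /= => h; rewrite -EFinM lee_fin.
  have [s0|s0] := eqVneq (k * u + k' * v) 0.
    by move: h; rewrite s0 invr0 mulr0 => /(lt_trans c0); rewrite ltxx.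
  have sp : 0 < k * u + k' * v.
    by rewrite lt0r s0 /=; apply: addr_ge0; apply: mulr_ge0 => //; apply: ltW.
  move: h; rewrite ltr_pdivlMr // => h.
  set K := (1 - c) * k / (c * k').
  have HK : K * (c * k') = (1 - c) * k.
    by rewrite /K mulfVK // mulf_neq0 // gt_eqF.
  have ck0 : 0 < c * k' by apply: mulr_gt0.
  nra.
all: rewrite /= ?(Ey _ k0) ?(Ey _ k'0) ?addey ?addye //= ?invr0 ?mulr0.
all: by move/(lt_trans c0); rewrite ltxx.
Qed.

Lemma final_ineq (R : realType) (j0 j1 q K : R) :
  0 <= j0 -> 0 <= j1 -> 0 < j0 + j1 -> 0 < q -> q * K = 1 -> j0 <= K * j1 ->
  j0 / (j0 + j1) <= 1 / (q + 1).
Proof.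
move=> j00 j10 s0 q0 qK h.
have q1 : 0 < q + 1 by lra.
rewrite ler_pdivrMr // mulrAC ler_pdivlMr // mul1r.
have : q * j0 <= q * (K * j1) by rewrite ler_pM2l.
rewrite mulrA qK mul1r => h2.
lra.
Qed.

Lemma qK_lemma (R : fieldType) (a a' p p' c : R) : a != 0 -> a' != 0 -> p != 0 -> p' != 0 -> c != 0 -> 1 - c != 0 ->
  p / p' / (a / a') * (c / (1 - c)) * ((1 - c) * (a / p) / (c * (a' / p'))) = 1.
Proof. by move=> h1 h2 h3 h4 h5 h6; field; rewrite h1 h2 h3 h4 h5 h6. Qed.

Lemma succ_iff (R : realType) (c n dd : R) : 0 <= dd -> 0 < c ->
  (c < n / dd) = ((0 < dd) && (c * dd < n)).
Proof.
move=> d0 c0; have [->|dn0] := eqVneq dd 0.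
  by rewrite invr0 mulr0 ltxx /= ltNge (ltW c0).
have dp : 0 < dd by rewrite lt0r dn0.
by rewrite dp /= ltr_pdivlMr.
Qed.

Theorem theorem1 (d1 d2 : measure_display) (T : measurableType d1)
  (X : measurableType d2) (R : realType)
  (th : T -> R) (delta c : R)
  (Pa Pd : probability T R) (mu : {measure set X -> \bar R})
  (f : T -> X -> R) :
  measurable_fun setT th ->
  0 < c < 1 ->
  (* likelihood: a jointly measurable probability density w.r.t. mu *)
  sigma_finite setT mu ->
  measurable_fun setT (fun p : T * X => f p.1 p.2) ->
  (forall t x, 0 <= f t x) ->
  (forall t, (\int[mu]_x (f t x)%:E = 1)%E) ->
  (* both priors charge E and its complement *)
  (0 < Pa (effect_event th delta))%E ->
  (0 < Pa (~` effect_event th delta))%E ->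
  (0 < Pd (effect_event th delta))%E ->
  (0 < Pd (~` effect_event th delta))%E ->
  (* equal conditional priors given E and given not E *)
  (forall A, measurable A ->
     Pr Pa (A `&` effect_event th delta) / Pr Pa (effect_event th delta) =
     Pr Pd (A `&` effect_event th delta) / Pr Pd (effect_event th delta)) ->
  (forall A, measurable A ->
     Pr Pa (A `&` ~` effect_event th delta) / Pr Pa (~` effect_event th delta) =
     Pr Pd (A `&` ~` effect_event th delta) / Pr Pd (~` effect_event th delta)) ->
  (* Pr_d(S = 1) > 0 *)
  (0 < joint Pd mu f setT (success Pa f (effect_event th delta) c))%E ->
  PID Pa Pd mu f (effect_event th delta) c <=
    1 / ((odds Pd (effect_event th delta) / odds Pa (effect_event th delta))
          * (c / (1 - c)) + 1).
Proof.
move=> mth /andP[c0 c1] Hmu mf f0 f1 PaE PaCE PdE PdCE HE HCE Hpos.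
set E := effect_event th delta.
have mE : measurable E.
  rewrite (_ : E = th @^-1` `]delta, +oo[%classic); last first.
    by apply/seteqP; split => t; rewrite /E /effect_event /= in_itv /= andbT.
  rewrite -[X in measurable X]setTI; apply: mth => //; exact: measurable_itv.
have mCE : measurable (~` E) by exact: measurableC.
pose mu' := mksf Hmu.
pose F : T * X -> \bar R := fun p => (f p.1 p.2)%:E.
have mF : measurable_fun setT F by apply/measurable_EFinP.
have F0 p : (0 <= F p)%E by rewrite lee_fin.
have mFt x : measurable_fun setT (fun t => (f t x)%:E).
  exact: (measurable_fun_pair1 (f := F)).
have mFx t : measurable_fun setT (fun x => (f t x)%:E).
  exact: (measurable_fun_pair2 (f := F)).
have finP (P : probability T R) A : measurable A -> P A = (Pr P A)%:E.
  move=> mA; rewrite /Pr fineK // ge0_fin_numE //.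
  exact: (le_lt_trans (probability_le1 P mA) (ltry 1)).
set a := Pr Pa E. set a' := Pr Pa (~` E). set p := Pr Pd E. set p' := Pr Pd (~` E).
have a0 : 0 < a by rewrite -lte_fin /a -(finP Pa E mE).
have a'0 : 0 < a' by rewrite -lte_fin /a' -(finP Pa _ mCE).
have p0 : 0 < p by rewrite -lte_fin /p -(finP Pd E mE).
have p'0 : 0 < p' by rewrite -lte_fin /p' -(finP Pd _ mCE).
have hE A : measurable A -> A `<=` E -> Pa A = ((a / p)%:E * Pd A)%E.
  move=> mA AE; have := HE A mA; rewrite setIidl // => h.
  rewrite (finP Pa A mA) (finP Pd A mA) -EFinM; congr EFin.
  have -> : Pr Pa A = Pr Pd A / p * a by rewrite -h divfK // gt_eqF.
  by ring.
have hCE A : measurable A -> A `<=` ~` E -> Pa A = ((a' / p')%:E * Pd A)%E.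
  move=> mA AE; have := HCE A mA; rewrite setIidl // => h.
  rewrite (finP Pa A mA) (finP Pd A mA) -EFinM; congr EFin.
  have -> : Pr Pa A = Pr Pd A / p' * a' by rewrite -h divfK // gt_eqF.
  by ring.
pose g1 x := (\int[Pd]_(t in E) (f t x)%:E)%E.
pose g0 x := (\int[Pd]_(t in ~` E) (f t x)%:E)%E.
have g10 x : (0 <= g1 x)%E by apply: integral_ge0 => t _; rewrite lee_fin.
have g00 x : (0 <= g0 x)%E by apply: integral_ge0 => t _; rewrite lee_fin.
have numE x : (\int[Pa]_(t in E) (f t x)%:E = (a / p)%:E * g1 x)%E.
  apply: int_scale => //; first by rewrite divr_ge0 // ltW.
    exact: measurable_funS (mFt x).
  by move=> t _; rewrite lee_fin.
have numCE x : (\int[Pa]_(t in ~` E) (f t x)%:E = (a' / p')%:E * g0 x)%E.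
  apply: int_scale => //; first by rewrite divr_ge0 // ltW.
    exact: measurable_funS (mFt x).
  by move=> t _; rewrite lee_fin.
have splitT (P : probability T R) x : (\int[P]_t (f t x)%:E =
    \int[P]_(t in E) (f t x)%:E + \int[P]_(t in ~` E) (f t x)%:E)%E.
  rewrite -(setUCr E) ge0_integral_setU //.
  - by rewrite setUCr.
  - by move=> t _; rewrite lee_fin.
  - by rewrite disj_set2E setICr.
have denE x : (\int[Pa]_t (f t x)%:E = (a / p)%:E * g1 x + (a' / p')%:E * g0 x)%E.
  by rewrite splitT numE numCE.
set K := (1 - c) * (a / p) / (c * (a' / p')).
have K0 : 0 <= K.
  rewrite /K divr_ge0 //; first by rewrite mulr_ge0 ?subr_ge0 ?ltW // divr_gt0.
  by rewrite mulr_ge0 ?ltW // divr_gt0.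
set S := success Pa f E c.
have KS x : S x -> (g0 x <= K%:E * g1 x)%E.
  rewrite /S /success /= /posterior numE denE => h.
  by apply: key_ineq => //; apply: divr_gt0.
have mS : measurable S.
  pose nm x := fine (\int[Pa]_(t in E) (f t x)%:E)%E.
  pose dn x := fine (\int[Pa]_t (f t x)%:E)%E.
  have -> : S = [set x | (0 < dn x) && (c * dn x < nm x)].
    apply/funext => x; rewrite /S /success /posterior /= succ_iff //.
    by apply: fine_ge0; apply: integral_ge0 => t _; rewrite lee_fin.
  have mdn : measurable_fun setT dn.
    apply: measurableT_comp; first exact: fine_measurable.
    exact (@measG _ _ _ _ _ Pa F setT mF F0 measurableT).
  have mnm : measurable_fun setT nm.
    apply: measurableT_comp; first exact: fine_measurable.
    exact (@measG _ _ _ _ _ Pa F E mF F0 mE).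
  have mb : measurable_fun setT (fun x => (0 < dn x) && (c * dn x < nm x)).
    apply: measurable_and; apply: measurable_fun_ltr => //.
    exact: measurable_funM.
  have := mb measurableT [set true] I.
  by rewrite setTI.
have JE B : measurable B -> joint Pd mu f B S =
    (\int[mu]_(x in S) \int[Pd]_(t in B) (f t x)%:E)%E.
  move=> mB; exact (@swap_int _ _ _ _ _ Pd mu' F B S mF F0 mB mS).
have mg1 : measurable_fun S g1.
  apply: measurable_funS (subsetT S) _ => //.
  exact (@measG _ _ _ _ _ Pd F E mF F0 mE).
have mg0 : measurable_fun S g0.
  apply: measurable_funS (subsetT S) _ => //.
  exact (@measG _ _ _ _ _ Pd F (~` E) mF F0 mCE).
have JTE : joint Pd mu f setT S = (joint Pd mu f E S + joint Pd mu f (~` E) S)%E.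
  rewrite !JE //.
  under eq_integral => x _ do rewrite splitT.
  by rewrite ge0_integralD // => x _; [exact: g10 | exact: g00].
have J01 : (joint Pd mu f (~` E) S <= K%:E * joint Pd mu f E S)%E.
  rewrite !JE // -ge0_integralZl_EFin //; last by move=> x _; exact: g10.
  apply: ge0_le_integral => //.
  - by move=> x _; exact: g00.
  - exact: emeasurable_funM.
have Jnn B : (0 <= joint Pd mu f B S)%E.
  by apply: integral_ge0 => t _; apply: integral_ge0 => x _; rewrite lee_fin.
have JT1 : (joint Pd mu f setT S <= 1)%E.
  rewrite /joint; apply: (@le_trans _ _ (\int[Pd]_(t in setT) (cst 1%E t))%E).
    apply: ge0_le_integral => //.
    - by move=> t _; apply: integral_ge0 => x _; rewrite lee_fin.
    - exact (@measF _ _ _ _ _ mu' F S mF F0 mS).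
    - move=> t _; rewrite (_ : cst 1%E t = \int[mu]_x (f t x)%:E)%E; last by rewrite f1.
      apply: ge0_subset_integral => //.
      by move=> x _; rewrite lee_fin.
  by rewrite integral_cst // mul1e; apply: probability_le1.
have fin1 : joint Pd mu f E S \is a fin_num.
  rewrite ge0_fin_numE //; apply: (le_lt_trans _ (ltry 1)).
  by apply: le_trans JT1; rewrite JTE leeDl.
have fin0 : joint Pd mu f (~` E) S \is a fin_num.
  rewrite ge0_fin_numE //; apply: (le_lt_trans _ (ltry 1)).
  by apply: le_trans JT1; rewrite JTE leeDr.
rewrite /PID -/S JTE (fineD fin1 fin0).
move: J01 Hpos; rewrite -/S JTE -(fineK fin1) -(fineK fin0) -EFinM -EFinD !lte_fin lee_fin.
move=> J01 Hpos.
rewrite /= [fine _ + fine _]addrC; apply: (@final_ineq R _ _ _ K _ _ _ _ _ J01).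
- exact: fine_ge0 (Jnn _).
- exact: fine_ge0 (Jnn _).
- by rewrite addrC.
- rewrite /odds -/a -/a' -/p -/p'.
  apply: mulr_gt0; first by apply: divr_gt0; apply: divr_gt0.
  by apply: divr_gt0 => //; rewrite subr_gt0.
- rewrite /odds -/a -/a' -/p -/p' /K.
  by apply: qK_lemma; rewrite ?gt_eqF // subr_gt0.
Qed.
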